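(* Let $A=(a_{ij})\in M_n(\mathbb{C})$ and suppose the Schur map $S_A\colon M_n(\mathbb{C})\to M_n(\mathbb{C})$, $S_A(B)=A\circ B$, is nonzero and multiplicative (i.e. $S_A(BC)=S_A(B)S_A(C)$ for all $B,C$). Then: (i) all entries of $A$ are nonzero, $A^{*}=\overline{A^{[-1]}}$, and $A$ is diagonalizable; (ii) $\|A\|\ge n$, and if $A^{*}=A$ then $\|A\|=n$; (iii) if $A=A^{*}$, then $S_A$ is numerical range preserving, i.e. $W(S_A(B))=W(B)$ for all $B\in M_n(\mathbb{C})$.
   Context: $A\circ B=(a_{ij}b_{ij})$ is the entrywise product. For a matrix $A$ with no zero entries, $A^{[-1]}=(1/a_{ij})$ is its entrywise reciprocal, and $\overline{X}$ denotes the entrywise complex conjugate; $A^*$ is the conjugate transpose. $\|A\|$ is the operator (spectral) norm of $A$ acting on $\mathbb{C}^n$. The numerical range of $B$ is $W(B)=\{\langle Bx,x\rangle : x\in\mathbb{C}^n,\ \|x\|=1\}$. *)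

(* Defs.v *)
From HB Require Import structures.
From mathcomp Require Import all_boot all_order all_algebra.
From mathcomp Require Import complex.
From mathcomp Require Import classical_sets reals.
From mathcomp Require Import sesquilinear spectral.
Set Implicit Arguments. Unset Strict Implicit. Unset Printing Implicit Defensive.
Import Order.TTheory GRing.Theory Num.Theory.
Local Open Scope ring_scope.
Local Open Scope classical_set_scope.

Definition hadamard (C : pzRingType) n (A B : 'M[C]_n) : 'M[C]_n :=
  \matrix_(i, j) (A i j * B i j).

Definition ereciprocal (C : unitRingType) n (A : 'M[C]_n) : 'M[C]_n :=
  map_mx GRing.inv A.

Definition econj (R : rcfType) n (X : 'M[R[i]]_n) : 'M[R[i]]_n :=
  map_mx Num.conj X.

Definition adjmx (R : rcfType) n (A : 'M[R[i]]_n) : 'M[R[i]]_n :=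
  (A ^t* )%sesqui.

Definition vnorm (R : rcfType) n (x : 'cV[R[i]]_n) : R :=
  Num.sqrt (\sum_i (ComplexField.Normc.normc (x i 0)) ^+ 2).

Definition opnorm (R : realType) n (A : 'M[R[i]]_n) : R :=
  sup [set vnorm (A *m x) | x in [set x : 'cV[R[i]]_n | vnorm x = 1]].

Definition numrange (R : rcfType) n (B : 'M[R[i]]_n) : set R[i] :=
  [set ((x ^t* )%sesqui *m B *m x) 0 0 | x in [set x : 'cV[R[i]]_n | vnorm x = 1]].

(* Main.v *)
Require Import Defs.
From HB Require Import structures.
From mathcomp Require Import all_boot all_order all_algebra.
From mathcomp Require Import complex.
From mathcomp Require Import classical_sets reals.
From mathcomp Require Import sesquilinear spectral.
From mathcomp Require Import ring lra.
Import Order.TTheory GRing.Theory Num.Theory.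
Local Open Scope ring_scope.
Set Implicit Arguments. Unset Strict Implicit. Unset Printing Implicit Defensive.

Section Helpers.
Variable R : realType.
Local Notation C := (R[i]).
Local Notation nc := (@ComplexField.Normc.normc R).

Lemma nc_ge0 (z : C) : 0 <= nc z.
Proof. by case: z => a b; exact: sqrtr_ge0. Qed.

Lemma nc_conj (z : C) : nc (Num.conj z) = nc z.
Proof. by case: z => a b; rewrite /= sqrrN. Qed.

Lemma nc_real (r : R) : nc ((r%:C)%C) = `|r|.
Proof. by rewrite /= expr0n /= addr0 sqrtr_sqr. Qed.

Lemma nc_nat (k : nat) : nc (k%:R) = k%:R.
Proof.
have -> : (k%:R : C) = ((k%:R : R)%:C)%C by rewrite rmorph_nat.
by rewrite nc_real ger0_norm.
Qed.

Lemma nc_sum (I : Type) (r : seq I) (P : pred I) (F : I -> C) :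
  nc (\sum_(i <- r | P i) F i) <= \sum_(i <- r | P i) nc (F i).
Proof.
apply: (big_ind2 (fun x y => nc x <= y)).
- by rewrite ComplexField.Normc.normc0.
- move=> x1 y1 x2 y2 h1 h2; apply: le_trans (le_normcD _ _) _.
  exact: lerD.
- by [].
Qed.

Lemma nc_sqr (z : C) : ((nc z ^+ 2)%:C)%C = z * Num.conj z.
Proof. by rewrite (rmorphXn (real_complex R)) /= -sqr_normc. Qed.

Lemma nc_eq1 (z : C) : z * Num.conj z = 1 -> nc z = 1.
Proof.
move=> h; apply/eqP; rewrite -sqrp_eq1 ?nc_ge0 //; apply/eqP.
by apply: complexI; rewrite nc_sqr h.
Qed.

Lemma cs_sum n (u : 'I_n -> R) :
  (\sum_i u i) ^+ 2 <= n%:R * \sum_i u i ^+ 2.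
Proof.
have h : 0 <= \sum_i \sum_j (u i - u j) ^+ 2.
  by apply: sumr_ge0 => i _; apply: sumr_ge0 => j _; exact: sqr_ge0.
have e : \sum_i \sum_j (u i - u j) ^+ 2 =
   2%:R * (n%:R * \sum_i u i ^+ 2) - 2%:R * (\sum_i u i) ^+ 2.
  transitivity (\sum_i (n%:R * u i ^+ 2 + \sum_j u j ^+ 2 - 2%:R * u i * \sum_j u j)).
    apply: eq_bigr => i _.
    transitivity (\sum_j (u i ^+ 2 + u j ^+ 2 - 2%:R * u i * u j)).
      by apply: eq_bigr => j _; rewrite sqrrB; ring.
    by rewrite sumrB big_split /= sumr_const card_ord -mulr_sumr !mulr_natl.
  rewrite sumrB big_split /= -mulr_sumr sumr_const card_ord -mulr_suml.
  rewrite -mulr_sumr -mulr_natl; ring.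
rewrite e subr_ge0 in h.
by rewrite -(ler_pM2l (_ : 0 < 2%:R :> R)) ?ltr0n.
Qed.


Local Notation vn := (@vnorm R _).

Lemma vnormE n (x : 'cV[C]_n) : vn x = Num.sqrt (\sum_i nc (x i 0) ^+ 2).
Proof. by []. Qed.

Lemma sumsq_ge0 n (x : 'cV[C]_n) : 0 <= \sum_i nc (x i 0) ^+ 2.
Proof. by apply: sumr_ge0 => i _; exact: sqr_ge0. Qed.

Lemma vnorm1 n (x : 'cV[C]_n) : vn x = 1 -> \sum_i nc (x i 0) ^+ 2 = 1.
Proof. by move=> h; rewrite -(sqr_sqrtr (sumsq_ge0 x)) -vnormE h expr1n. Qed.

Lemma vnormZ n (c : C) (x : 'cV[C]_n) : vn (c *: x) = nc c * vn x.
Proof.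
rewrite !vnormE.
under eq_bigr do rewrite mxE ComplexField.Normc.normcM exprMn.
by rewrite -mulr_sumr sqrtrM ?sqr_ge0 // sqrtr_sqr ger0_norm ?nc_ge0.
Qed.

Lemma vnorm_diag n (c : 'rV[C]_n) (x : 'cV[C]_n) :
  (forall i, nc (c 0 i) = 1) -> vn (diag_mx c *m x) = vn x.
Proof.
move=> hc; rewrite !vnormE; congr Num.sqrt; apply: eq_bigr => i _.
by rewrite mul_diag_mx mxE ComplexField.Normc.normcM hc mul1r.
Qed.

Lemma nc_le1 n (x : 'cV[C]_n) j : vn x = 1 -> nc (x j 0) <= 1.
Proof.
move=> /vnorm1 h.
have : nc (x j 0) ^+ 2 <= 1.
  rewrite -h (bigD1 j) //= lerDl; apply: sumr_ge0 => i _; exact: sqr_ge0.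
have := nc_ge0 (x j 0); nra.
Qed.


Lemma had_delta n (A : 'M[C]_n) i j :
  hadamard A (delta_mx i j) = A i j *: delta_mx i j.
Proof.
apply/matrixP=> a b; rewrite !mxE.
by case: (a =P i) => [->|_]; case: (b =P j) => [->|_]; rewrite /= ?mulr1 ?mulr0.
Qed.

Lemma schur_key n (A : 'M[C]_n) :
  (forall B C : 'M[C]_n, hadamard A (B *m C) = hadamard A B *m hadamard A C) ->
  forall i j k, A i k = A i j * A j k.
Proof.
move=> HM i j k.
have := congr1 (fun M : 'M[C]_n => M i k) (HM (delta_mx i j) (delta_mx j k)).
rewrite mul_delta_mx !had_delta -scalemxAl -scalemxAr mul_delta_mx scalerA.
by rewrite !mxE !eqxx /= !mulr1.
Qed.

Section Struct.
Variables (n : nat) (A : 'M[C]_n).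
Hypothesis Hkey : forall i j k, A i k = A i j * A j k.
Hypothesis Hdiag : forall k, A k k = 1.

Lemma sA_inv i j : A i j * A j i = 1.
Proof. by rewrite -Hkey Hdiag. Qed.

Lemma sA_neq0 i j : A i j != 0.
Proof. by apply/negP => /eqP h; have := sA_inv i j; rewrite h mul0r => /eqP; rewrite eq_sym oner_eq0. Qed.

Lemma sA_invE i j : (A i j)^-1 = A j i.
Proof. by apply: (mulfI (sA_neq0 i j)); rewrite sA_inv divrr // unitfE sA_neq0. Qed.

Lemma sA_adj : adjmx A = econj (ereciprocal A).
Proof. by apply/matrixP => i j; rewrite !mxE sA_invE. Qed.

Lemma sA_sq : A *m A = n%:R *: A.
Proof.
apply/matrixP => i k; rewrite !mxE.
under eq_bigr do rewrite -Hkey.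
by rewrite sumr_const card_ord mulr_natl.
Qed.

End Struct.


Lemma sA_diag n' (A : 'M[C]_n'.+1) : A *m A = n'.+1%:R *: A -> diagonalizable A.
Proof.
move=> hsq; apply/diagonalizableP; exists [:: 0; n'.+1%:R].
  by rewrite /= inE andbT eq_sym pnatr_eq0.
apply: mxminpoly_min.
rewrite !big_cons big_nil mulr1 rmorphM /= !rmorphB /= horner_mx_X !horner_mx_C.
have -> : (0%:M : 'M[C]_n'.+1) = 0 by apply/matrixP=> i j; rewrite !mxE mul0rn.
rewrite subr0 mulrBr -[A * A]/(A *m A) hsq.
by rewrite -[A * _]/(A *m _) mul_mx_scalar subrr.
Qed.


Local Open Scope classical_set_scope.

Lemma op_ub n (M : 'M[C]_n) :
  has_ubound [set vn (M *m x) | x in [set x : 'cV[C]_n | vn x = 1]].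
Proof.
exists (Num.sqrt (\sum_i (\sum_j nc (M i j)) ^+ 2)) => y [x hx <-].
rewrite vnormE; apply: ler_wsqrtr; apply: ler_sum => i _.
apply: lerXn2r; rewrite ?nnegrE; [exact: nc_ge0 | by apply: sumr_ge0 => j _; exact: nc_ge0 |].
rewrite mxE; apply: le_trans (nc_sum _ _ _) _; apply: ler_sum => j _.
rewrite ComplexField.Normc.normcM; apply: ler_piMr; first exact: nc_ge0.
exact: nc_le1.
Qed.

Section Norm.
Variables (n' : nat) (A : 'M[C]_n'.+1).
Hypothesis Hkey : forall i j k, A i k = A i j * A j k.
Hypothesis Hdiag : forall k, A k k = 1.

Lemma eig_vec : exists x : 'cV[C]_n'.+1, vn x = 1 /\ vn (A *m x) = n'.+1%:R.
Proof.
pose d : 'cV[C]_n'.+1 := \col_i A i 0.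
have Ad : A *m d = n'.+1%:R *: d.
  apply/matrixP => i k; rewrite !mxE (ord1 k).
  under eq_bigr do rewrite mxE -Hkey.
  by rewrite sumr_const card_ord mulr_natl.
have Sd : 1 <= \sum_i nc (d i 0) ^+ 2.
  rewrite (bigD1 ord0) //= mxE Hdiag ComplexField.Normc.normc1 expr1n lerDl.
  by apply: sumr_ge0 => i _; exact: sqr_ge0.
have vpos : 0 < vn d by rewrite vnormE sqrtr_gt0; apply: lt_le_trans Sd.
exists (((vn d)^-1)%:C%C *: d); split.
  by rewrite vnormZ nc_real ger0_norm ?invr_ge0 ?ltW // mulVf // gt_eqF.
rewrite -scalemxAr Ad scalerA vnormZ ComplexField.Normc.normcM nc_real nc_nat.
by rewrite ger0_norm ?invr_ge0 ?ltW // mulrAC mulVf ?gt_eqF // mul1r.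
Qed.

Lemma op_lb : n'.+1%:R <= opnorm A.
Proof.
have [x [hx hAx]] := eig_vec.
rewrite /opnorm -hAx; apply: (ub_le_sup (op_ub A)); by exists x.
Qed.

Hypothesis Hn1 : forall i j, nc (A i j) = 1.

Lemma op_ub_herm : opnorm A <= n'.+1%:R.
Proof.
have [x0 [hx0 _]] := eig_vec.
rewrite /opnorm; apply: ge_sup; first by exists (vn (A *m x0)), x0.
move=> y [x hx <-].
rewrite vnormE -(ger0_norm (ler0n _ n'.+1)) -sqrtr_sqr; apply: ler_wsqrtr.
pose T := \sum_j nc (x j 0).
have hi i : nc ((A *m x) i 0) <= T.
  rewrite mxE; under eq_bigr do rewrite (Hkey i ord0) -mulrA.
  rewrite -mulr_sumr ComplexField.Normc.normcM Hn1 mul1r.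
  apply: le_trans (nc_sum _ _ _) _; apply: ler_sum => j _.
  by rewrite ComplexField.Normc.normcM Hn1 mul1r.
have hT : T ^+ 2 <= n'.+1%:R.
  by have := cs_sum (fun j => nc (x j 0)); rewrite vnorm1 // mulr1.
apply: le_trans (_ : \sum_(i < n'.+1) T ^+ 2 <= _).
  apply: ler_sum => i _; apply: lerXn2r; rewrite ?nnegrE;
    [exact: nc_ge0 | by apply: sumr_ge0 => j _; exact: nc_ge0 | exact: hi].
rewrite sumr_const card_ord -[_ *+ n'.+1]mulr_natl.
have hn : (0:R) <= n'.+1%:R := ler0n _ _.
rewrite [X in _ <= X]expr2; exact: ler_wpM2l.
Qed.

End Norm.


Section Range.
Variables (n' : nat) (A : 'M[C]_n'.+1).
Hypothesis Hkey : forall i j k, A i k = A i j * A j k.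
Hypothesis Hdiag : forall k, A k k = 1.
Hypothesis Hh : forall i j, Num.conj (A j i) = A i j.
Hypothesis Hn1 : forall i j, nc (A i j) = 1.

Let D : 'M[C]_n'.+1 := diag_mx (\row_i A i 0).
Let E : 'M[C]_n'.+1 := diag_mx (\row_i A 0 i).

Lemma hadE B : hadamard A B = D *m B *m E.
Proof.
apply/matrixP => i j; rewrite /D /E mul_mx_diag mxE mul_diag_mx /hadamard !mxE (Hkey i 0 j).
by rewrite mulrAC.
Qed.

Lemma adjE (x : 'cV[C]_n'.+1) : ((E *m x) ^t* )%sesqui = ((x ^t* )%sesqui) *m D.
Proof.
apply/matrixP => i j; rewrite /D /E mul_mx_diag mul_diag_mx !mxE.
by rewrite rmorphM /= Hh mulrC.
Qed.

Lemma val_id (B : 'M[C]_n'.+1) (x : 'cV[C]_n'.+1) :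
  (((x ^t* )%sesqui) *m (D *m B *m E) *m x) 0 0 =
  ((((E *m x) ^t* )%sesqui) *m B *m (E *m x)) 0 0.
Proof. by rewrite adjE !mulmxA. Qed.

Lemma numrange_had B : numrange (hadamard A B) = numrange B.
Proof.
have nE : forall i, nc ((\row_i A 0 i : 'rV[C]_n'.+1) 0 i) = 1.
  by move=> i; rewrite mxE.
have nD : forall i, nc ((\row_i A i 0 : 'rV[C]_n'.+1) 0 i) = 1.
  by move=> i; rewrite mxE.
rewrite /numrange hadE; apply/seteqP; split => z /= [x hx <-].
  exists (E *m x); last by rewrite val_id.
  by rewrite /= vnorm_diag.
exists (D *m x); first by rewrite /= vnorm_diag.
rewrite val_id.
have -> : E *m (D *m x) = x.
  apply/matrixP => i j; rewrite /D /E !mul_diag_mx !mxE.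
  by rewrite mulrA sA_inv // mul1r.
by [].
Qed.
End Range.

End Helpers.

Theorem corollary2p3 (R : realType) (n : nat) (A : 'M[R[i]]_n) :
  (exists B : 'M[R[i]]_n, hadamard A B != 0) ->
  (forall B C : 'M[R[i]]_n, hadamard A (B *m C) = hadamard A B *m hadamard A C) ->
  [/\ (* (i) *)
      ((forall i j, A i j != 0) /\
       adjmx A = econj (ereciprocal A) /\
       diagonalizable A),
      (* (ii) *)
      (n%:R <= opnorm A /\ (adjmx A = A -> opnorm A = n%:R))
    & (* (iii) *)
      (adjmx A = A -> forall B : 'M[R[i]]_n,
          numrange (hadamard A B) = numrange B)].
Proof.
move=> [B HB] HM.
have Hkey := schur_key HM.
have : [exists i, exists j, A i j != 0].
  apply: contraNT HB => /existsPn H; apply/eqP/matrixP => i j.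
  move/existsPn: (H i) => /(_ j); rewrite negbK => /eqP h.
  by rewrite !mxE h mul0r.
case/existsP => i /existsP [j Hij].
destruct n as [|n']; first by have := ltn_ord i.
have Hdiag : forall k, A k k = 1.
  move=> k; have hik : A i k != 0.
    by apply: contraNneq Hij => h; rewrite (Hkey i k j) h mul0r.
  by apply: (mulfI hik); rewrite -Hkey mulr1.
have Hherm : adjmx A = A -> (forall i j, Num.conj (A j i) = A i j) /\
    (forall i j, ComplexField.Normc.normc (A i j) = 1).
  move=> hA.
  have Hh : forall a b, Num.conj (A b a) = A a b.
    by move=> a b; have := congr1 (fun M : 'M[R[i]]_n'.+1 => M a b) hA; rewrite /adjmx !mxE.
  split=> // a b; apply: nc_eq1; by rewrite (Hh b a) sA_inv.
split.
- split; [exact: sA_neq0 | split; [exact: sA_adj | apply: sA_diag; exact: sA_sq]].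
- split; first exact: op_lb.
  move=> hA; have [_ hn] := Hherm hA.
  by apply: le_anti; rewrite op_lb // op_ub_herm.
- move=> hA B'; have [Hh hn] := Hherm hA; exact: numrange_had.
Qed.
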